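(* Let $G=(V,E,s)$ be a flow graph and let $D$ be its dominator tree, with $t(v)$ denoting the parent of a vertex $v\neq s$ in $D$. (i) If $G'$ is obtained from $G$ by inserting an edge, then $D$ still has the sibling property with respect to $G'$: for any two siblings $v,w$ in $D$, $v$ does not dominate $w$ in $G'$. (An insertion may, however, violate the parent property of $D$.) (ii) If $G'=(V,E',s)$ is obtained from $G$ by deleting an edge, then $D$ still has the parent property with respect to $G'$: for every edge $(v,w)\in E'$ such that $v$ is reachable from $s$ in $G'$, $v$ is a descendant of $t(w)$ in $D$. (A deletion may, however, violate the sibling property of $D$.)
   Context: A flow graph $G=(V,E,s)$ is a directed graph with a distinguished start vertex $s$. A vertex is reachable if there is a path from $s$ to it. For reachable vertices, $w$ dominates $v$ if every path from $s$ to $v$ contains $w$. The immediate dominator $d(v)$ of a reachable $v\neq s$ is the proper dominator of $v$ dominated by all other proper dominators of $v$; the dominator tree $D$ is the tree on the reachable vertices rooted at $s$ in which the parent of each $v\neq s$ is $d(v)$. For a tree $T$ rooted at $s$ on the reachable vertices with parent function $t$: $T$ has the parent property if for every edge $(v,w)$ with $v$ reachable, $v$ is a descendant of $t(w)$ in $T$; $T$ has the sibling property if for all siblings $v,w$ in $T$, $v$ does not dominate $w$. *)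

(* Defs.v *)
From mathcomp Require Import all_boot.
Set Implicit Arguments. Unset Strict Implicit. Unset Printing Implicit Defensive.

Section FlowGraph.
Variables (V : finType) (e : rel V) (s : V).

Definition reachable (v : V) : Prop :=
  exists p : seq V, path e s p /\ last s p = v.

(* w dominates v: every path from s to v contains w
   (meaningful for reachable v) *)
Definition dominates (w v : V) : Prop :=
  forall p : seq V, path e s p -> last s p = v -> w \in s :: p.

Definition idom (v d : V) : Prop :=
  d != v /\ dominates d v /\
  forall u, u != v -> dominates u v -> dominates u d.

(* t is the parent function of the dominator tree D of (V,e,s):
   for every reachable v <> s, t v = d(v). (t s is irrelevant.) *)
Definition is_dom_tree_parent (t : V -> V) : Prop :=
  forall v, reachable v -> v != s -> idom v (t v).
End FlowGraph.

Definition tree_descendant (V : finType) (t : V -> V) (s v u : V) : Prop :=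
  exists k : nat, iter k t v = u /\ forall j, j < k -> iter j t v != s.

Definition insert_edge (V : finType) (e : rel V) (a b : V) : rel V :=
  fun x y => e x y || ((x == a) && (y == b)).
Definition delete_edge (V : finType) (e : rel V) (a b : V) : rel V :=
  fun x y => e x y && ~~ ((x == a) && (y == b)).

(* Main.v *)
Require Import Defs.
From mathcomp Require Import all_boot.

Section Aux.
Variables (V : finType) (e : rel V) (s : V).

Lemma prefix_path (p : seq V) (x : V) : path e s p -> x \in s :: p ->
  exists q, [/\ path e s q, last s q = x, size q <= size p &
             (x != last s p -> size q < size p)].
Proof.
move=> hp hx; case/splitPl: hx hp => p1 p2 hl.
rewrite cat_path => /andP [h1 _].
exists p1; split => //; first by rewrite size_cat leq_addr.
case: p2 => [|y p2]; first by rewrite cats0 hl eqxx.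
by move=> _; rewrite size_cat /= addnS ltnS leq_addr.
Qed.

Lemma dom_antisym (x y : V) : x != y -> dominates e s x y -> dominates e s y x ->
  forall p, path e s p -> last s p = y -> False.
Proof.
move=> nxy hxy hyx p; elim: {p}(size p) {-2}p (leqnn (size p)) => [|n IH] p hn hp hl.
  case: p hn hp hl => // _ _ hl.
  have := hxy [::] isT hl; rewrite inE => /eqP hx; subst.
  by rewrite /= eqxx in nxy.
have [q [hq hql hqs hqlt]] := @prefix_path p _ hp (hxy p hp hl).
have hq' : size q < size p by apply: hqlt; rewrite hl.
have [r [hr hrl _ hrlt]] := @prefix_path q _ hq (hyx q hq hql).
have hr' : size r < size q by apply: hrlt; rewrite hql eq_sym.
apply: (IH r) hr hrl; rewrite -ltnS; apply: leq_trans hn.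
by apply: ltn_trans hq'.
Qed.

Lemma dom_chain (t : V -> V) : is_dom_tree_parent e s t ->
  forall n v p, path e s p -> last s p = v -> size p <= n ->
  forall u, dominates e s u v ->
  exists k, iter k t v = u /\ forall j, j < k -> iter j t v != s.
Proof.
move=> hD; elim=> [|n IH] v p hp hl hn u hu.
  case: p hp hl hn => // _ hl _.
  have := hu [::] isT hl; rewrite inE => /eqP ->.
  by exists 0; split => // j.
have [->|nuv] := eqVneq u v; first by exists 0; split => // j.
have nvs : v != s.
  apply/eqP => hvs; move: hu nuv; rewrite hvs => hu nuv.
  by have := hu [::] isT erefl; rewrite inE (negbTE nuv).
have hr : reachable e s v by exists p.
have [ntv [htv hall]] := hD v hr nvs.
have [q [hq hql _ hqlt]] := @prefix_path p _ hp (htv p hp hl).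
have hq' : size q < size p by apply: hqlt; rewrite hl.
have [k [hk hj]] := IH (t v) q hq hql (leq_trans (leq_trans hq' hn) (leqnn _))
   u (hall u nuv hu).
exists k.+1; split; first by rewrite iterSr.
case=> [|j] // hjk; rewrite iterSr; exact: hj.
Qed.

End Aux.

Theorem proposition1 (V : finType) (e : rel V) (s : V) (t : V -> V)
    (hD : is_dom_tree_parent e s t) :
  (* (i) sibling property survives edge insertion *)
  (forall a b : V,
     forall v w : V,
       reachable e s v -> reachable e s w -> v != s -> w != s ->
       v != w -> t v = t w ->
       ~ dominates (insert_edge e a b) s v w)
  /\
  (* (ii) parent property survives edge deletion *)
  (forall a b : V, e a b ->
     forall v w : V,
       delete_edge e a b v w -> reachable (delete_edge e a b) s v ->
       w != s ->
       tree_descendant t s v (t w)).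
Proof.
split.
  move=> a b v w hv hw nvs nws nvw htvw hdom.
  have hdomG : dominates e s v w.
    move=> p hp hl; apply: hdom hl; apply: sub_path hp.
    by move=> x y /= h; rewrite /insert_edge h.
  have [_ [_ hallw]] := hD w hw nws.
  have h1 : dominates e s v (t v) by rewrite htvw; apply: hallw.
  have [ntv [h2 _]] := hD v hv nvs.
  case: hv => p [hp hl].
  exact: (@dom_antisym V e s (t v) v ntv h2 h1 p hp hl).
move=> a b _ v w hvw [p [hp hl]] nws.
have hsub : subrel (delete_edge e a b) e by move=> x y /andP [].
have hpG : path e s p := sub_path hsub hp.
have hevw : e v w := hsub _ _ hvw.
have hpw : path e s (rcons p w) by rewrite rcons_path hpG hl.
have hlw : last s (rcons p w) = w by rewrite last_rcons.
have hw : reachable e s w by exists (rcons p w).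
have [ntw [htw _]] := hD w hw nws.
have hdv : dominates e s (t w) v.
  move=> q hq hql.
  have hqw : path e s (rcons q w) by rewrite rcons_path hq hql.
  have := htw _ hqw (last_rcons _ _ _).
  by rewrite -rcons_cons mem_rcons in_cons (negbTE ntw).
have [k [hk hj]] := @dom_chain V e s t hD _ v p hpG hl (leqnn _) _ hdv.
by exists k.
Qed.
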